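(* For every integer $j\ge 0$, $$\sum_{n=1}^{\infty}\frac{\binom{2n}{n}}{n\,4^n}\,\zeta_n^{\star}(\{2\}_j)=2\,\eta(2j+1).$$
   Context: For integers $n\ge1$ and $j\ge0$, the multiple harmonic star sum of depth $j$ and weight $2j$ is $\zeta_n^{\star}(\{2\}_j)=\sum_{n\ge k_1\ge\dots\ge k_j\ge1}\prod_{i=1}^j\frac{1}{k_i^2}$, with $\zeta_n^{\star}(\{2\}_0)=1$. $\eta$ denotes the Dirichlet eta function, $\eta(s)=\sum_{n=1}^\infty\frac{(-1)^{n-1}}{n^s}$, with $\eta(1)=\ln 2$. *)

(* Defs.v *)
From Stdlib Require Import Reals.
From Coquelicot Require Import Coquelicot.
Open Scope R_scope.

(* Multiple harmonic star sum zeta_n^star({2}_j):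
   sum over n >= k_1 >= ... >= k_j >= 1 of prod 1/k_i^2.
   Recursively: zeta_n^star({2}_0) = 1 and
   zeta_n^star({2}_(j+1)) = sum_{k=1}^n (1/k^2) zeta_k^star({2}_j). *)
Fixpoint zeta_star2 (j : nat) (n : nat) : R :=
  match j with
  | O => 1
  | S j' => sum_n_m (fun k => / (INR k ^ 2) * zeta_star2 j' k) 1 n
  end.

(* Dirichlet eta function at a positive integer s:
   eta(s) = sum_{n>=1} (-1)^(n-1) / n^s  (series indexed from m = n-1 = 0). *)
Definition eta (s : nat) : R :=
  Series (fun m : nat => (-1) ^ m / (INR (m + 1)) ^ s).

Definition central_binom (n : nat) : R := Binomial.C (2 * n) n.

(* Main.v *)
Require Import Defs.
From Stdlib Require Import Reals Lra Lia.
From Coquelicot Require Import Coquelicot.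
Open Scope R_scope.

Lemma sum_plus_R (u v : nat -> R) n m :
  @eq R (sum_n_m (fun k => u k + v k) n m) (sum_n_m u n m + sum_n_m v n m).
Proof. apply (sum_n_m_plus (G:=R_AbelianMonoid)). Qed.
Lemma sum_scal_R (c : R) (u : nat -> R) n m :
  @eq R (sum_n_m (fun k => c * u k) n m) (c * sum_n_m u n m).
Proof. apply (sum_n_m_mult_l (K:=R_Ring)). Qed.
Lemma sum_ext_R (u v : nat -> R) n m :
  (forall k, (n <= k <= m)%nat -> u k = v k) -> @eq R (sum_n_m u n m) (sum_n_m v n m).
Proof. apply sum_n_m_ext_loc. Qed.
Lemma sum_Sm_R (u : nat -> R) n m : (n <= S m)%nat ->
  @eq R (sum_n_m u n (S m)) (sum_n_m u n m + u (S m)).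
Proof. intro H. apply (sum_n_Sm (G:=R_AbelianMonoid)); auto. Qed.
Lemma sum_empty_R (u : nat -> R) n m : (m < n)%nat -> @eq R (sum_n_m u n m) 0.
Proof. intro H. apply (sum_n_m_zero (G:=R_AbelianMonoid)); auto. Qed.
Lemma sum_zero_R (u : nat -> R) n m : (forall k, (n <= k <= m)%nat -> u k = 0) ->
  @eq R (sum_n_m u n m) 0.
Proof. intro H. rewrite (sum_ext_R u (fun _ => zero)); auto.
  apply (sum_n_m_const_zero (G:=R_AbelianMonoid)). Qed.
Lemma sum_Sn_R (u : nat -> R) n m : (n <= m)%nat ->
  @eq R (sum_n_m u n m) (u n + sum_n_m u (S n) m).
Proof. intro H. apply (sum_Sn_m (G:=R_AbelianMonoid)); auto. Qed.
Lemma sum_shift_R (u : nat -> R) n m :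
  @eq R (sum_n_m (fun i => u (S i)) n m) (sum_n_m u (S n) (S m)).
Proof. apply (sum_n_m_S (G:=R_AbelianMonoid)). Qed.
Lemma sum_minus_R (u v : nat -> R) n m :
  @eq R (sum_n_m (fun k => u k - v k) n m) (sum_n_m u n m - sum_n_m v n m).
Proof.
  unfold Rminus. rewrite sum_plus_R.
  rewrite (sum_ext_R (fun k => - v k) (fun k => (-1) * v k)) by (intros; ring).
  rewrite sum_scal_R. match goal with |- ?x = ?y => change (@eq R x y) end. ring. Qed.

Definition a (n : nat) : R := central_binom n / 4 ^ n.

Lemma a0 : a 0 = 1.
Proof. unfold a, central_binom, Binomial.C. simpl. field. Qed.

Lemma a_S n : a (S n) = a n * (2 * INR n + 1) / (2 * INR n + 2).
Proof.
  unfold a, central_binom, Binomial.C.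
  replace (2 * S n - S n)%nat with (S n) by lia.
  replace (2 * n - n)%nat with n by lia.
  replace (2 * S n)%nat with (S (S (2 * n))) by lia.
  rewrite !fact_simpl, !mult_INR, !S_INR, mult_INR.
  simpl (INR 2).
  assert (H1 := INR_fact_neq_0 n). assert (H2 := INR_fact_neq_0 (2*n)).
  assert (0 <= INR n) by apply pos_INR.
  simpl pow. field. repeat split; try lra. apply pow_nonzero; lra.
Qed.

Fixpoint B (N k : nat) : R :=
  match k with
  | O => 1
  | S k => B N k * (INR N - INR k) / (INR N + INR k + 1)
  end.

Lemma B_zero N k : (N < k)%nat -> B N k = 0.
Proof.
  induction k as [|k IH]; intro H; [lia|].
  simpl. destruct (Nat.eq_dec N k) as [->|Hne].
  - unfold Rminus. rewrite Rplus_opp_r. unfold Rdiv. ring.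
  - rewrite IH by lia. unfold Rdiv. ring.
Qed.

Lemma B_nonneg_mono N k : 0 <= B N (S k) <= B N k.
Proof.
  induction k as [|k IH].
  - simpl. assert (0 <= INR N) by apply pos_INR.
    split; [apply Rmult_le_pos; [lra| apply Rlt_le, Rinv_0_lt_compat; lra]|].
    apply (Rmult_le_reg_r (INR N + 0 + 1)); [lra|].
    unfold Rdiv. rewrite Rmult_assoc, Rinv_l by lra. lra.
  - destruct (Nat.le_gt_cases (S k) N) as [Hk|Hk].
    + change (B N (S (S k))) with (B N (S k) * (INR N - INR (S k)) / (INR N + INR (S k) + 1)).
      apply le_INR in Hk. assert (0 <= INR (S k)) by apply pos_INR.
      destruct IH as [IH1 IH2].
      split.
      * apply Rmult_le_pos; [apply Rmult_le_pos; lra| apply Rlt_le, Rinv_0_lt_compat; lra].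
      * apply (Rmult_le_reg_r (INR N + INR (S k) + 1)); [lra|].
        unfold Rdiv. rewrite Rmult_assoc, Rinv_l by lra. nra.
    + rewrite B_zero by lia. destruct IH as [IH1 IH2].
      rewrite B_zero in IH1 |- * by lia. lra.
Qed.

Lemma B_nonneg N k : 0 <= B N k.
Proof. destruct k. simpl; lra. apply B_nonneg_mono. Qed.

Lemma R2 N k : B (S N) (S k) = B N k * (INR N + 1)^2 / ((INR N + INR k + 1) * (INR N + INR k + 2)).
Proof.
  assert (0 <= INR N) by apply pos_INR.
  induction k as [|k IH].
  - cbn [B]. rewrite S_INR. change (INR 0) with 0. field. lra.
  - assert (0 <= INR k) by apply pos_INR.
    change (B (S N) (S (S k))) with (B (S N) (S k) * (INR (S N) - INR (S k)) / (INR (S N) + INR (S k) + 1)).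
    rewrite IH. cbn [B]. rewrite !S_INR. field. lra.
Qed.

Lemma R3 n m : B n m * (INR n + 1)^2 = B (S n) m * ((INR n + 1)^2 - INR m ^ 2).
Proof.
  destruct m as [|k].
  - simpl. ring.
  - rewrite R2. cbn [B]. rewrite S_INR. assert (0 <= INR n) by apply pos_INR.
    assert (0 <= INR k) by apply pos_INR. field. lra.
Qed.

Definition sg (m : nat) : R := (-1) ^ (S m).

Lemma sg_S m : sg (S m) = - sg m.
Proof. unfold sg. simpl. ring. Qed.

Lemma base_alt n : (1 <= n)%nat ->
  2 * sum_n_m (fun m => sg m * B n m) 1 n = 1.
Proof.
  intro Hn.
  assert (Hn' : 1 <= INR n) by (apply (le_INR 1); auto).
  set (D := fun m => B n m * (INR n - INR m) / (2 * INR n)).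
  assert (HB : forall M, B n (S M) = D M + D (S M)).
  { intro M. unfold D. cbn [B]. rewrite S_INR.
    assert (0 <= INR M) by apply pos_INR. field. lra. }
  assert (HS : forall M, @eq R (sum_n_m (fun m => sg m * B n m) 1 M) (D 0%nat + sg M * D M)).
  { induction M as [|M IH].
    - rewrite sum_empty_R by lia. unfold sg. simpl. ring.
    - rewrite sum_Sm_R by lia. rewrite IH, HB, sg_S. ring. }
  rewrite HS. unfold D. cbn [B]. unfold Rminus. rewrite Rplus_opp_r.
  change (INR 0) with 0. field. lra.
Qed.

Definition zf (j n : nat) : R := 2 * sum_n_m (fun m => sg m * B n m / INR m ^ (2 * j)) 1 n.

Lemma zeta0 n : (1 <= n)%nat -> zeta_star2 0 n = zf 0 n.
Proof.
  intro Hn. unfold zf. simpl zeta_star2. rewrite <- (base_alt n Hn). f_equal.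
  apply sum_ext_R. intros. simpl. field.
Qed.

Lemma zetaS j : (forall n, (1 <= n)%nat -> zeta_star2 j n = zf j n) ->
  forall n, zeta_star2 (S j) n = zf (S j) n.
Proof.
  intros Hj n. induction n as [|n IH].
  - unfold zf. cbn [zeta_star2]. rewrite !sum_empty_R by lia. ring.
  - change (zeta_star2 (S j) (S n)) with
      (sum_n_m (fun k => / (INR k ^ 2) * zeta_star2 j k) 1 (S n)).
    rewrite sum_Sm_R by lia.
    change (sum_n_m (fun k => / (INR k ^ 2) * zeta_star2 j k) 1 n) with (zeta_star2 (S j) n).
    rewrite IH, Hj by lia. unfold zf.
    set (c := / INR (S n) ^ 2).
    transitivity (2 * (sum_n_m (fun m => sg m * B n m / INR m ^ (2 * S j)) 1 (S n)
       + c * sum_n_m (fun m => sg m * B (S n) m / INR m ^ (2 * j)) 1 (S n))).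
    1: { rewrite (sum_Sm_R (fun m => sg m * B n m / INR m ^ (2 * S j)) 1 n) by lia. rewrite (B_zero n (S n)) by lia. unfold c; unfold Rdiv; ring. }
    f_equal. rewrite <- sum_scal_R, <- sum_plus_R. apply sum_ext_R.
    intros m Hm. unfold c.
    assert (Hm' : 1 <= INR m) by (apply (le_INR 1); lia).
    replace (2 * S j)%nat with (2 * j + 2)%nat by lia. rewrite pow_add.
    assert (HR := R3 n m). rewrite S_INR.
    assert (0 <= INR n) by apply pos_INR.
    assert (INR m ^ (2 * j) <> 0) by (apply pow_nonzero; lra).
    replace (B n m) with (B (S n) m * ((INR n + 1) ^ 2 - INR m ^ 2) / (INR n + 1)^2).
    2: { rewrite <- HR. field. lra. }
    field. repeat split; try lra. 
Qed.

Lemma zeta_formula j n : (1 <= n)%nat -> zeta_star2 j n = zf j n.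
Proof.
  revert n. induction j as [|j IH].
  - apply zeta0.
  - intros n _. apply zetaS. exact IH.
Qed.

Definition Q (N k : nat) : R := a N * B N k.
Definition W (N m : nat) : R := sum_n_m (fun n => Q n m / INR n) 1 N.
Definition Rr (N k : nat) : R := Q N k + Q N (S k).

Lemma P0 N : Q (S N) 0 = (Q N 0 + Q N 1) / 2.
Proof.
  unfold Q. rewrite a_S. cbn [B]. change (INR 0) with 0.
  assert (0 <= INR N) by apply pos_INR. field. lra.
Qed.

Lemma P1 N k : Q (S N) (S k) = (Q N k + 2 * Q N (S k) + Q N (S (S k))) / 4.
Proof.
  unfold Q. rewrite a_S, R2. cbn [B]. rewrite S_INR.
  assert (0 <= INR N) by apply pos_INR. assert (0 <= INR k) by apply pos_INR.
  field. lra.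
Qed.

Lemma star N p : INR (S p) * Q (S N) (S p) / INR (S N) = (Q N p - Q N (S (S p))) / 4.
Proof.
  unfold Q. rewrite a_S, R2. cbn [B]. rewrite !S_INR.
  assert (0 <= INR N) by apply pos_INR. assert (0 <= INR p) by apply pos_INR.
  field. lra.
Qed.

Lemma Dlem N p : @eq R (sum_n_m (fun k => Rr (S N) k - Rr N k) 0 p) ((Q N (S (S p)) - Q N p) / 4).
Proof.
  induction p as [|p IH].
  - rewrite sum_n_n. unfold Rr. rewrite P0, P1. field.
  - rewrite sum_Sm_R by lia. rewrite IH. unfold Rr. rewrite !P1. field.
Qed.

Lemma t_closed N p : @eq R (INR (S p) * (/ INR (S p) - W N (S p))) (sum_n_m (Rr N) 0 p).
Proof.
  revert p. induction N as [|N IH]; intro p.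
  - unfold W. rewrite sum_empty_R by lia.
    transitivity 1. { rewrite Rminus_0_r. apply Rinv_r. apply not_0_INR. lia. }
    induction p as [|p IHp].
    + rewrite sum_n_n. unfold Rr, Q. rewrite a0. cbn [B]. change (INR 0) with 0. field.
    + rewrite sum_Sm_R by lia. rewrite <- IHp. unfold Rr, Q.
      rewrite !(B_zero 0) by lia. ring.
  - unfold W. rewrite sum_Sm_R by lia. fold (W N (S p)).
    transitivity (INR (S p) * (/ INR (S p) - W N (S p)) - INR (S p) * Q (S N) (S p) / INR (S N)).
    { field. split; apply not_0_INR; lia. }
    rewrite IH, star.
    assert (H := sum_minus_R (Rr (S N)) (Rr N) 0 p).
    rewrite Dlem in H. unfold Rr at 1 in H. unfold Rr at 2. lra.
Qed.

Lemma W_zero N : W N (S N) = 0.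
Proof.
  unfold W. apply sum_zero_R. intros n Hn. unfold Q. rewrite B_zero by lia.
  unfold Rdiv. ring.
Qed.

Lemma PS_eq j N :
  @eq R (sum_n_m (fun n => a n / INR n * zeta_star2 j n) 1 N)
        (2 * sum_n_m (fun m => sg m * W N m / INR m ^ (2 * j)) 1 N).
Proof.
  induction N as [|N IH].
  - rewrite !sum_empty_R by lia. ring.
  - rewrite sum_Sm_R by lia. rewrite IH.
    rewrite zeta_formula by lia. unfold zf.
    transitivity (2 * (sum_n_m (fun m => sg m * W N m / INR m ^ (2 * j)) 1 (S N)
      + (a (S N) / INR (S N)) * sum_n_m (fun m => sg m * B (S N) m / INR m ^ (2 * j)) 1 (S N))).
    { rewrite (sum_Sm_R (fun m => sg m * W N m / INR m ^ (2 * j)) 1 N) by lia.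
      rewrite W_zero. match goal with |- ?x = ?y => change (@eq R x y) end. unfold Rdiv. ring. }
    f_equal. rewrite <- sum_scal_R, <- sum_plus_R. apply sum_ext_R.
    intros m Hm. unfold W. rewrite (sum_Sm_R _ 1 N) by lia. fold (W N m).
    unfold Q. unfold Rdiv. ring.
Qed.

Lemma a_nonneg n : 0 <= a n.
Proof.
  induction n as [|n IH]. rewrite a0; lra.
  rewrite a_S. assert (0 <= INR n) by apply pos_INR.
  apply Rmult_le_pos. apply Rmult_le_pos; lra. apply Rlt_le, Rinv_0_lt_compat; lra.
Qed.

Lemma a_sq n : a n ^ 2 * (2 * INR n + 1) <= 1.
Proof.
  induction n as [|n IH]. rewrite a0. simpl. lra.
  rewrite a_S, S_INR. assert (0 <= INR n) by apply pos_INR.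
  assert (0 <= a n ^ 2) by (apply pow_le; apply a_nonneg).
  replace ((a n * (2 * INR n + 1) / (2 * INR n + 2)) ^ 2 * (2 * (INR n + 1) + 1))
    with (a n ^ 2 * (2 * INR n + 1) * ((2 * INR n + 1) * (2 * INR n + 3) / (2 * INR n + 2)^2))
    by (field; lra).
  assert (Hq : (2 * INR n + 1) * (2 * INR n + 3) / (2 * INR n + 2)^2 <= 1).
  { apply (Rmult_le_reg_r ((2 * INR n + 2)^2)). nra.
    unfold Rdiv. rewrite Rmult_assoc, Rinv_l by nra. nra. }
  assert (0 <= (2 * INR n + 1) * (2 * INR n + 3) / (2 * INR n + 2)^2).
  { apply Rmult_le_pos. nra. apply Rlt_le, Rinv_0_lt_compat. nra. }
  nra.
Qed.

Lemma Q_nonneg N k : 0 <= Q N k.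
Proof. unfold Q. apply Rmult_le_pos. apply a_nonneg. apply B_nonneg. Qed.

Lemma Q_mono N k : Q N (S k) <= Q N k.
Proof. unfold Q. apply Rmult_le_compat_l. apply a_nonneg. apply B_nonneg_mono. Qed.

Lemma Rr_nonneg N k : 0 <= Rr N k.
Proof. unfold Rr. generalize (Q_nonneg N k) (Q_nonneg N (S k)). lra. Qed.
Lemma Rr_mono N k : Rr N (S k) <= Rr N k.
Proof. unfold Rr. generalize (Q_mono N k) (Q_mono N (S k)). lra. Qed.

Lemma sum_ge_last (r : nat -> R) : (forall k, r (S k) <= r k) ->
  forall p, INR (S p) * r p <= sum_n_m r 0 p.
Proof.
  intros Hr p. induction p as [|p IH].
  - rewrite sum_n_n. simpl. lra.
  - rewrite sum_Sm_R by lia. rewrite (S_INR (S p)). specialize (Hr p).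
    assert (0 <= INR (S p)) by apply pos_INR. nra.
Qed.

Lemma sum_nonneg_R (r : nat -> R) n m : (forall k, 0 <= r k) -> 0 <= sum_n_m r n m.
Proof.
  intro H. destruct (Nat.le_gt_cases n m) as [Hnm|Hnm].
  - induction m as [|m IH].
    + replace n with 0%nat by lia. rewrite sum_n_n. apply H.
    + destruct (Nat.eq_dec n (S m)) as [->|Hne].
      * rewrite sum_n_n. apply H.
      * rewrite sum_Sm_R by lia. specialize (IH ltac:(lia)). specialize (H (S m)). lra.
  - rewrite sum_empty_R by lia. lra.
Qed.

Definition tt (N m : nat) : R := / INR m - W N m.

Lemma tt_eq N p : tt N (S p) = sum_n_m (Rr N) 0 p / INR (S p).
Proof.
  rewrite <- t_closed. unfold tt. field. apply not_0_INR. lia.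
Qed.

Lemma tt_nonneg N p : 0 <= tt N (S p).
Proof.
  rewrite tt_eq. apply Rmult_le_pos. apply sum_nonneg_R. apply Rr_nonneg.
  apply Rlt_le, Rinv_0_lt_compat, lt_0_INR. lia.
Qed.

Lemma tt_mono N p : tt N (S (S p)) <= tt N (S p).
Proof.
  rewrite !tt_eq. rewrite sum_Sm_R by lia.
  assert (H := sum_ge_last (Rr N) (Rr_mono N) p).
  assert (H2 := Rr_mono N p).
  set (s := sum_n_m (Rr N) 0 p) in *.
  rewrite (S_INR (S p)). assert (0 <= INR p) by apply pos_INR. rewrite S_INR in *.
  apply (Rmult_le_reg_r ((INR p + 1) * (INR p + 1 + 1))). nra.
  replace ((s + Rr N (S p)) / (INR p + 1 + 1) * ((INR p + 1) * (INR p + 1 + 1)))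
    with ((s + Rr N (S p)) * (INR p + 1)) by (field; lra).
  replace (s / (INR p + 1) * ((INR p + 1) * (INR p + 1 + 1)))
    with (s * (INR p + 1 + 1)) by (field; lra).
  nra.
Qed.

Lemma tt_1 N : tt N 1 <= 2 * a N.
Proof.
  replace 1%nat with (S 0) by reflexivity. rewrite tt_eq, sum_n_n.
  unfold Rr, Q. cbn [B]. change (INR 0) with 0. simpl (INR 1).
  assert (0 <= INR N) by apply pos_INR. assert (Ha := a_nonneg N).
  replace ((a N * 1 + a N * (1 * (INR N - 0) / (INR N + 0 + 1))) / 1)
     with (a N * (2 - 1 / (INR N + 1))) by (field; lra).
  assert (0 <= 1 / (INR N + 1)). { apply Rmult_le_pos. lra. apply Rlt_le, Rinv_0_lt_compat; lra. }
  nra.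
Qed.

Lemma alt_bound L : forall v : nat -> R, (forall i, 0 <= v i) -> (forall i, v (S i) <= v i) ->
  0 <= sum_n_m (fun i => (-1) ^ i * v i) 0 L <= v 0%nat.
Proof.
  induction L as [|L IH]; intros v H0 Hm.
  - rewrite sum_n_n. simpl. specialize (H0 0%nat). lra.
  - rewrite sum_Sn_R by lia. rewrite <- sum_shift_R.
    rewrite (sum_ext_R _ (fun i => (-1) * ((-1) ^ i * v (S i)))) by (intros; simpl; ring).
    rewrite sum_scal_R.
    specialize (IH (fun i => v (S i)) (fun i => H0 (S i)) (fun i => Hm (S i))).
    simpl in IH. specialize (Hm 0%nat). simpl. lra.
Qed.

Lemma inv_to0 : is_lim_seq (fun i => / INR (S i)) 0.
Proof.
  assert (H := is_lim_seq_INR). apply is_lim_seq_incr_1 in H.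
  apply is_lim_seq_inv in H; [|discriminate]. exact H.
Qed.

Lemma a_to0 : is_lim_seq a 0.
Proof.
  assert (H2 : is_lim_seq (fun n => a n ^ 2) 0).
  { apply is_lim_seq_le_le with (u := fun _ => 0) (w := fun n => / INR (S n)).
    - intro n. split. apply pow_le, a_nonneg.
      assert (H := a_sq n). rewrite S_INR. assert (0 <= INR n) by apply pos_INR.
      assert (0 <= a n ^ 2) by (apply pow_le, a_nonneg).
      apply (Rmult_le_reg_r (INR n + 1)). lra. rewrite Rinv_l by lra. nra.
    - apply is_lim_seq_const.
    - apply inv_to0. }
  assert (H := is_lim_seq_continuous sqrt _ 0 (continuity_pt_sqrt 0 (Rle_refl 0)) H2).
  rewrite sqrt_0 in H. eapply is_lim_seq_ext; [|exact H].
  intro n. simpl. apply sqrt_pow2, a_nonneg.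
Qed.

Lemma inv_pow_mono k i : / INR (S (S i)) ^ k <= / INR (S i) ^ k.
Proof.
  assert (0 < INR (S i)) by (apply lt_0_INR; lia).
  apply Rinv_le_contravar. apply pow_lt; lra.
  apply pow_incr. split. lra. apply le_INR. lia.
Qed.

Theorem mainTheorem12 (j : nat) :
  is_series
    (fun m : nat =>
       central_binom (m + 1) / (INR (m + 1) * 4 ^ (m + 1))
       * zeta_star2 j (m + 1))
    (2 * eta (2 * j + 1)).
Proof.
  set (Un := fun i : nat => / INR (i + 1) ^ (2 * j + 1)).
  assert (HUb : forall i, 0 <= Un i <= / INR (S i)).
  { intro i. unfold Un. rewrite Nat.add_1_r.
    assert (1 <= INR (S i)) by (apply (le_INR 1); lia).
    split. apply Rlt_le, Rinv_0_lt_compat, pow_lt; lra.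
    apply Rinv_le_contravar. lra.
    rewrite <- (pow_1 (INR (S i))) at 1. apply Rle_pow. lra. lia. }
  assert (HUd : Un_decreasing Un).
  { intro i. unfold Un. rewrite !Nat.add_1_r. apply inv_pow_mono. }
  assert (HUc : Un_cv Un 0).
  { apply is_lim_seq_Reals.
    apply is_lim_seq_le_le with (u := fun _ => 0) (w := fun n => / INR (S n)).
    exact HUb. apply is_lim_seq_const. apply inv_to0. }
  destruct (alternated_series Un HUd HUc) as [l Hl].
  set (g := fun m : nat => (-1) ^ m / INR (m + 1) ^ (2 * j + 1)).
  assert (Hg : is_lim_seq (sum_n g) l).
  { apply is_lim_seq_Reals. intros eps Heps. destruct (Hl eps Heps) as [N HN].
    exists N. intros n Hn. rewrite sum_n_Reals. apply HN. exact Hn. }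
  assert (Heta : eta (2 * j + 1) = l).
  { unfold eta. apply is_series_unique. exact Hg. }
  rewrite Heta.
  set (v := fun L i => tt (S L) (S i) / INR (S i) ^ (2 * j)).
  set (A := fun L => sum_n_m (fun i => (-1) ^ i * v L i) 0 L).
  assert (HA : forall L, 0 <= A L <= 2 * a (S L)).
  { intro L. unfold A.
    assert (Hb := alt_bound L (v L)).
    assert (H1 : forall i, 0 <= v L i).
    { intro i. unfold v. apply Rmult_le_pos. apply tt_nonneg.
      apply Rlt_le, Rinv_0_lt_compat, pow_lt, lt_0_INR. lia. }
    assert (H2 : forall i, v L (S i) <= v L i).
    { intro i. unfold v. unfold Rdiv.
      apply Rle_trans with (tt (S L) (S i) * / INR (S (S i)) ^ (2 * j)).
      apply Rmult_le_compat_r. apply Rlt_le, Rinv_0_lt_compat, pow_lt, lt_0_INR. lia.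
      apply tt_mono.
      apply Rmult_le_compat_l. apply tt_nonneg.
      apply inv_pow_mono. }
    specialize (Hb H1 H2).
    assert (v L 0%nat <= 2 * a (S L)).
    { unfold v. simpl (INR 1). rewrite pow1. unfold Rdiv. rewrite Rinv_1, Rmult_1_r.
      apply tt_1. }
    lra. }
  assert (HAl : is_lim_seq A 0).
  { apply is_lim_seq_le_le with (u := fun _ => 0) (w := fun L => 2 * a (S L)).
    exact HA. apply is_lim_seq_const.
    replace (Finite 0) with (Rbar_mult 2 0) by (simpl; f_equal; ring).
    apply is_lim_seq_scal_l. apply (is_lim_seq_incr_1 a). exact a_to0. }
  assert (Hid : forall L, sum_n (fun m : nat =>
       central_binom (m + 1) / (INR (m + 1) * 4 ^ (m + 1)) * zeta_star2 j (m + 1)) L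
       = 2 * sum_n g L - 2 * A L).
  { intro L. unfold sum_n.
    rewrite (sum_ext_R _ (fun m => (fun n => a n / INR n * zeta_star2 j n) (S m)))
      by (intros k _; rewrite Nat.add_1_r; unfold a; field;
          split; [apply pow_nonzero; lra | apply not_0_INR; lia]).
    rewrite (sum_shift_R (fun n => a n / INR n * zeta_star2 j n)), PS_eq.
    rewrite <- (sum_shift_R (fun m => sg m * W (S L) m / INR m ^ (2 * j))).
    unfold A. transitivity (2 * (sum_n_m g 0 L - sum_n_m (fun i => (-1)^i * v L i) 0 L)).
    2: { unfold sum_n. match goal with |- ?x = ?y => change (@eq R x y) end. ring. }
    f_equal. rewrite <- sum_minus_R. apply sum_ext_R. intros i _.
    unfold g, v, tt, sg. rewrite Nat.add_1_r, pow_add, pow_1.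
    assert (INR (S i) <> 0) by (apply not_0_INR; lia).
    assert (INR (S i) ^ (2 * j) <> 0) by (apply pow_nonzero; auto).
    simpl pow at 1 3. field. auto. }
  unfold is_series.
  change (is_lim_seq (sum_n (fun m : nat =>
       central_binom (m + 1) / (INR (m + 1) * 4 ^ (m + 1)) * zeta_star2 j (m + 1))) (2 * l)).
  eapply is_lim_seq_ext. { intro L. symmetry. apply Hid. }
  replace (2 * l) with (2 * l - 2 * 0) by ring.
  apply is_lim_seq_minus'.
  - replace (Finite (2 * l)) with (Rbar_mult 2 l) by reflexivity.
    apply is_lim_seq_scal_l. exact Hg.
  - replace (Finite (2 * 0)) with (Rbar_mult 2 0) by reflexivity.
    apply is_lim_seq_scal_l. exact HAl.
Qed.
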